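(* (a) Let $\{U_\alpha\}$ ($U_\alpha=gE_\alpha g^{-1}$, $g\in G_{<0}$) be a solution of the $(\mathrm{sl}_n(\mathbb{C}),\mathfrak{t})$-hierarchy and set $A_{m\alpha}:=\pi_{\geqslant0}(U_\alpha z^m)-U_\alpha z^m$ for $m\ge0$. Then for all $m_1,m_2\ge0$ and all $\alpha_1,\alpha_2$: $$\partial_{m_1\alpha_1}(A_{m_2\alpha_2})-\partial_{m_2\alpha_2}(A_{m_1\alpha_1})-[A_{m_1\alpha_1},A_{m_2\alpha_2}]=0.$$ (b) Let $\{V_\beta\}$ ($V_\beta=KE_\beta zK^{-1}$, $K\in G_{\leqslant0}$) be a solution of the strict $(\mathrm{sl}_n(\mathbb{C}),\mathfrak{t})$-hierarchy and set $D_{m\beta}:=\pi_{>0}(V_\beta z^{m-1})-V_\beta z^{m-1}$ for $m\ge1$. Then for all $m_1,m_2\ge1$ and all $\beta_1,\beta_2$: $$\partial_{m_1\beta_1}(D_{m_2\beta_2})-\partial_{m_2\beta_2}(D_{m_1\beta_1})-[D_{m_1\beta_1},D_{m_2\beta_2}]=0.$$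
   Context: $R$ is a commutative $\mathbb{C}$-algebra; $\mathrm{gl}_n(R)[z,z^{-1})$ is the algebra of formal series $\sum_{i=-\infty}^{N}X_iz^i$, $X_i\in\mathrm{gl}_n(R)$, bracket $[X,Y]=\sum[X_i,Y_j]z^{i+j}$; $\pi_{\geqslant0}$ (resp. $\pi_{>0}$) keeps the terms with $i\ge0$ (resp. $i\ge1$). $\mathfrak{t}\subset\mathrm{sl}_n(\mathbb{C})$ is commutative of maximal dimension $r$ with basis $E_1,\dots,E_r$. $G_{<0}=\{\mathrm{Id}+\sum_{i\ge1}Y_iz^{-i}\}$, $G_{\leqslant0}=\{\sum_{j\ge0}K_jz^{-j}\mid K_0\text{ invertible}\}$ (coefficients in $\mathrm{gl}_n(R)$). $R$ carries commuting $\mathbb{C}$-linear derivations $\partial_{m\alpha}$ ($m\ge0$ in (a), $m\ge1$ in (b), $1\le\alpha\le r$), acting coefficientwise. A solution of the $(\mathrm{sl}_n(\mathbb{C}),\mathfrak{t})$-hierarchy means $\partial_{m\alpha_1}(U_{\alpha_2})=[\pi_{\geqslant0}(U_{\alpha_1}z^m),U_{\alpha_2}]$ for all $m\ge0$, $\alpha_1,\alpha_2$; a solution of the strict hierarchy means $\partial_{m\beta_1}(V_{\beta_2})=[\pi_{>0}(V_{\beta_1}z^{m-1}),V_{\beta_2}]$ for all $m\ge1$, $\beta_1,\beta_2$. *)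

(* Defs.v *)
From HB Require Import structures.
From mathcomp Require Import all_boot all_order all_algebra.
Set Implicit Arguments. Unset Strict Implicit. Unset Printing Implicit Defensive.
Import Order.TTheory GRing.Theory Num.Theory.
Local Open Scope ring_scope.

(* Formal series  sum_{i=-oo}^{N} X_i z^i  with coefficients in 'M[R]_n = gl_n(R). *)
Section LSeries.
Variables (R : comNzRingType) (n : nat).

Record lseries := LSeries {
  lsN : int;
  lsc : int -> 'M[R]_n;
  lsP : forall k, lsN < k -> lsc k = 0 }.

Definition ls_eq (X Y : lseries) := forall k, lsc X k = lsc Y k.

Definition ls0 : lseries := @LSeries 0 (fun _ => 0) (fun _ _ => erefl).

Lemma ls_cst_P (M : 'M[R]_n) k :
  (0 : int) < k -> (if k == 0 then M else 0) = 0.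
Proof. by move=> hk; rewrite gt_eqF. Qed.
Definition ls_cst (M : 'M[R]_n) : lseries := @LSeries 0 _ (@ls_cst_P M).

Lemma ls_sub_P (X Y : lseries) k : Order.max (lsN X) (lsN Y) < k ->
  lsc X k - lsc Y k = 0.
Proof. by rewrite gt_max => /andP[hX hY]; rewrite !lsP // subr0. Qed.
Definition ls_sub (X Y : lseries) : lseries :=
  @LSeries (Order.max (lsN X) (lsN Y)) _ (@ls_sub_P X Y).

Lemma ls_shift_P (X : lseries) (m : nat) k : lsN X + m%:Z < k ->
  lsc X (k - m%:Z) = 0.
Proof. by move=> h; rewrite lsP // ltrBrDr. Qed.
Definition ls_shift (X : lseries) (m : nat) : lseries :=
  @LSeries (lsN X + m%:Z) _ (@ls_shift_P X m).

Lemma ls_pige_P (X : lseries) k : lsN X < k ->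
  (if (0 : int) <= k then lsc X k else 0) = 0.
Proof. by move=> h; rewrite lsP //; case: ifP. Qed.
Definition ls_pige (X : lseries) : lseries := @LSeries (lsN X) _ (@ls_pige_P X).

Lemma ls_pigt_P (X : lseries) k : lsN X < k ->
  (if (0 : int) < k then lsc X k else 0) = 0.
Proof. by move=> h; rewrite lsP //; case: ifP. Qed.
Definition ls_pigt (X : lseries) : lseries := @LSeries (lsN X) _ (@ls_pigt_P X).

(* product: (XY)_k = sum_{i+j=k} X_i Y_j ; with i = N_X - t, t >= 0 *)
Definition ls_mulc (X Y : lseries) (k : int) : 'M[R]_n :=
  \sum_(t < absz (lsN X + lsN Y - k + 1))
     lsc X (lsN X - t%:Z) *m lsc Y (k - lsN X + t%:Z).

Lemma ls_mul_P (X Y : lseries) k : lsN X + lsN Y < k -> ls_mulc X Y k = 0.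
Proof.
move=> h; rewrite /ls_mulc big1 // => t _.
rewrite [lsc Y _]lsP ?mulmx0 //.
have h1 : lsN Y < k - lsN X by rewrite ltrBrDl.
by apply: (lt_le_trans h1); rewrite lerDl.
Qed.
Definition ls_mul (X Y : lseries) : lseries :=
  @LSeries (lsN X + lsN Y) _ (@ls_mul_P X Y).

Definition ls_br (X Y : lseries) : lseries := ls_sub (ls_mul X Y) (ls_mul Y X).

End LSeries.

Section LMap.
Variables (R : comNzRingType) (n : nat).
Lemma ls_map_P (f : {additive R -> R}) (X : lseries R n) k : lsN X < k ->
  map_mx f (lsc X k) = 0.
Proof. by move=> h; rewrite lsP //; apply/matrixP => i j; rewrite !mxE raddf0. Qed.
Definition ls_map (f : {additive R -> R}) (X : lseries R n) : lseries R n :=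
  @LSeries R n (lsN X) _ (@ls_map_P f X).
End LMap.

Definition in_Gneg (R : comNzRingType) n (g : lseries R n) :=
  lsc g 0 = 1%:M /\ forall k : int, 0 < k -> lsc g k = 0.

Definition in_Gle0 (R : comNzRingType) n (K : lseries R n) :=
  (exists M : 'M[R]_n, M *m lsc K 0 = 1%:M /\ lsc K 0 *m M = 1%:M) /\
  forall k : int, 0 < k -> lsc K k = 0.

Definition ls_inverse (R : comNzRingType) n (g ginv : lseries R n) :=
  ls_eq (ls_mul g ginv) (ls_cst 1%:M) /\ ls_eq (ls_mul ginv g) (ls_cst 1%:M).

Definition is_derivation (R : comNzRingType) (d : R -> R) :=
  forall x y, d (x * y) = d x * y + x * d y.

Definition emb (C : fieldType) (R : comAlgType C) n (M : 'M[C]_n) : 'M[R]_n :=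
  map_mx (in_alg R) M.

(* E_1..E_r is a basis of a commutative subalgebra t of sl_n(C) of maximal
   dimension r among commutative subalgebras of sl_n(C). *)
Definition comm_mxs (C : fieldType) n s (W : 'M[C]_(s, n * n)) :=
  (forall i, \tr (vec_mx (row i W)) = 0) /\
  (forall i j, vec_mx (row i W) *m vec_mx (row j W)
               = vec_mx (row j W) *m vec_mx (row i W)).

Definition cartan_basis (C : fieldType) n r (E : 'I_r -> 'M[C]_n) :=
  let W := \matrix_(a < r) mxvec (E a) in
  comm_mxs W /\ row_free W /\
  (forall s (W' : 'M[C]_(s, n * n)), comm_mxs W' -> (\rank W' <= r)%N).

Definition A_op (R : comNzRingType) n (U : lseries R n) (m : nat) :=
  ls_sub (ls_pige (ls_shift U m)) (ls_shift U m).
Definition D_op (R : comNzRingType) n (V : lseries R n) (m : nat) :=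
  ls_sub (ls_pigt (ls_shift V m.-1)) (ls_shift V m.-1).

(* Main.v *)
Require Import Defs.
From HB Require Import structures.
From mathcomp Require Import all_boot all_order all_algebra zify.
Import Order.TTheory GRing.Theory Num.Theory.
Local Open Scope ring_scope.

Module SubLib.
Set Implicit Arguments. Unset Strict Implicit. Unset Printing Implicit Defensive.
Section W.
Variable V : zmodType.
Definition W (f : int -> V) (h : int) (l : nat) := \sum_(t < l) f (h - t%:Z).

Lemma W_top f hi h l : (forall i, hi < i -> f i = 0) -> hi < h ->
  W f h l.+1 = W f (h-1) l.
Proof.
move=> Hf hh; rewrite /W big_ord_recl /= subr0 Hf // add0r.
apply: eq_bigr => t _; congr f; rewrite /bump /=; lia.
Qed.

Lemma W_bot f lo h l : (forall i, i < lo -> f i = 0) -> h - l%:Z < lo ->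
  W f h l.+1 = W f h l.
Proof. by move=> Hf hl; rewrite /W big_ord_recr /= Hf // addr0. Qed.

Lemma W_canon f lo hi : (forall i, hi < i -> f i = 0) -> (forall i, i < lo -> f i = 0) ->
  forall h l, hi <= h -> h - l%:Z < lo -> W f h l = W f hi (absz (hi - lo + 1)).
Proof.
move=> Hu Hl h l hh hl.
case: (ltP hi lo) => hlo.
  have f0 : forall i, f i = 0.
    move=> i; case: (ltP hi i) => hi'; first exact: Hu.
    by apply: Hl; lia.
  by rewrite /W !big1 // => t _; rewrite f0.
set c := absz (hi - lo + 1).
have hc : c%:Z = hi - lo + 1 by rewrite /c; lia.
have s1 : forall e, W f hi (c + e) = W f hi c.
  elim=> [|e IH]; first by rewrite addn0.
  by rewrite addnS (W_bot (lo:=lo)) // ; lia.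
have s2 : forall d h l, h = hi + d%:Z -> h - l%:Z < lo -> W f h l = W f hi c.
  elim=> [|d IH] h' l' eh hl'.
    have -> : l' = (c + (l' - c))%N by lia.
    by rewrite eh addr0 s1.
  case: l' hl' => [|l'] hl'; first lia.
  rewrite (W_top (hi:=hi)) //; last lia.
  apply: IH; lia.
apply: (s2 (absz (h - hi))); lia.
Qed.

Lemma W_eq f lo hi h1 l1 h2 l2 : (forall i, hi < i -> f i = 0) -> (forall i, i < lo -> f i = 0) ->
  hi <= h1 -> h1 - l1%:Z < lo -> hi <= h2 -> h2 - l2%:Z < lo -> W f h1 l1 = W f h2 l2.
Proof. by move=> Hu Hl *; rewrite (W_canon Hu Hl (h:=h1) (l:=l1)) // (W_canon Hu Hl (h:=h2) (l:=l2)). Qed.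
End W.

Section LS.
Variables (R : comNzRingType) (n : nat).
Local Notation ls := (lseries R n).
Local Notation c := (@lsc R n).

Definition ub (X : ls) (b : int) := forall i, b < i -> c X i = 0.
Lemma ubN X : ub X (lsN X). Proof. exact: lsP. Qed.
#[local] Hint Resolve ubN : core.
Lemma ub_le X b b' : ub X b -> b <= b' -> ub X b'.
Proof. by move=> H hb i hi; apply: H; lia. Qed.

Lemma mulE (X Y : ls) k bX bY H L : ub X bX -> ub Y bY -> bX <= H -> H - L%:Z < k - bY ->
  c (ls_mul X Y) k = \sum_(t < L) c X (H - t%:Z) *m c Y (k - H + t%:Z).
Proof.
move=> hX hY hH hL.
pose f i := c X i *m c Y (k - i).
have e1 : \sum_(t < L) c X (H - t%:Z) *m c Y (k - H + t%:Z) = W f H L.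
  by apply: eq_bigr => t _; rewrite /f; congr (_ *m c Y _); lia.
have e2 : c (ls_mul X Y) k = W f (lsN X) (absz (lsN X + lsN Y - k + 1)).
  by rewrite /= /ls_mulc /W; apply: eq_bigr => t _; rewrite /f; congr (_ *m c Y _); lia.
rewrite e1 e2.
have [hi [h1 [h2 h3]]] : exists hi, hi <= bX /\ hi <= lsN X /\ (hi = bX \/ hi = lsN X).
  by case: (leP bX (lsN X)) => hb; [exists bX|exists (lsN X)]; lia.
have [lo [l1 [l2 l3]]] : exists lo, k - bY <= lo /\ k - lsN Y <= lo /\ (lo = k - bY \/ lo = k - lsN Y).
  by case: (leP (k - bY) (k - lsN Y)) => hb; [exists (k - lsN Y)|exists (k - bY)]; lia.
apply: (@W_eq _ f lo hi).
- move=> i hi'; rewrite /f; case: h3 => h3.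
  + by rewrite hX ?mul0mx //; lia.
  + by rewrite ubN ?mul0mx //; lia.
- move=> i hi'; rewrite /f; case: l3 => l3.
  + by rewrite hY ?mulmx0 //; lia.
  + by rewrite (@ubN Y) ?mulmx0 //; lia.
all: lia.
Qed.

Definition LL (a : int) := (absz a).+1.
Lemma LLP a : a < (LL a)%:Z.
Proof. by apply: le_lt_trans (lez_abs a) _; rewrite /LL ltz_nat ltnSn. Qed.

Lemma mulC (X Y : ls) k bX bY : ub X bX -> ub Y bY ->
  c (ls_mul X Y) k = \sum_(t < LL (bX + bY - k)) c X (bX - t%:Z) *m c Y (k - bX + t%:Z).
Proof. move=> hX hY; apply: (@mulE X Y k bX bY) => //; have := LLP (bX + bY - k); lia. Qed.

Lemma mul_ub0 (X Y : ls) k bX bY : ub X bX -> ub Y bY -> bX + bY < k -> c (ls_mul X Y) k = 0.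
Proof.
move=> hX hY hk; rewrite (@mulE X Y k bX bY bX 0) // ?big_ord0 //; lia.
Qed.

Lemma mul_lb0 (X Y : ls) k lX lY : (forall i, i < lX -> c X i = 0) ->
  (forall i, i < lY -> c Y i = 0) -> k < lX + lY -> c (ls_mul X Y) k = 0.
Proof.
move=> hX hY hk; rewrite (@mulC X Y k (lsN X) (lsN Y)) //.
apply: big1 => t _; case: (ltP (lsN X - t%:Z) lX) => h.
  by rewrite hX ?mul0mx.
by rewrite hY ?mulmx0 //; lia.
Qed.

Lemma ub_sub (X Y : ls) : ub (ls_sub X Y) (lsN (ls_sub X Y)). Proof. exact: ubN. Qed.
Lemma lsN_subl (X Y : ls) : lsN X <= lsN (ls_sub X Y).
Proof. by rewrite /= le_max lexx. Qed.
Lemma lsN_subr (X Y : ls) : lsN Y <= lsN (ls_sub X Y).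
Proof. by rewrite /= le_max lexx orbT. Qed.

Lemma mul_subl (X Y Z : ls) k :
  c (ls_mul (ls_sub X Y) Z) k = c (ls_mul X Z) k - c (ls_mul Y Z) k.
Proof.
set M := lsN (ls_sub X Y).
rewrite (@mulC _ _ k M (lsN Z)) // (@mulC X _ k M (lsN Z)) //;
  last by apply: ub_le (@ubN X) (lsN_subl X Y).
rewrite (@mulC Y _ k M (lsN Z)) //; last by apply: ub_le (@ubN Y) (lsN_subr X Y).
by rewrite -sumrB; apply: eq_bigr => t _ /=; rewrite mulmxBl.
Qed.

Lemma mul_subr (X Y Z : ls) k :
  c (ls_mul Z (ls_sub X Y)) k = c (ls_mul Z X) k - c (ls_mul Z Y) k.
Proof.
set M := lsN (ls_sub X Y).
rewrite (@mulC _ _ k (lsN Z) M) // (@mulC _ X k (lsN Z) M) //;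
  last by apply: ub_le (@ubN X) (lsN_subl X Y).
rewrite (@mulC _ Y k (lsN Z) M) //; last by apply: ub_le (@ubN Y) (lsN_subr X Y).
by rewrite -sumrB; apply: eq_bigr => t _ /=; rewrite mulmxBr.
Qed.

Lemma mul_eql (X X' Y : ls) : ls_eq X X' -> ls_eq (ls_mul X Y) (ls_mul X' Y).
Proof.
move=> e k; set M := Order.max (lsN X) (lsN X').
have hM : ub X M /\ ub X' M.
  split; [apply: ub_le (@ubN X) _ | apply: ub_le (@ubN X') _]; by rewrite le_max lexx ?orbT.
rewrite (@mulC X Y k M (lsN Y)) //; try apply hM.
rewrite (@mulC X' Y k M (lsN Y)) //; try apply hM.
by apply: eq_bigr => t _; rewrite e.
Qed.

Lemma mul_eqr (X X' Y : ls) : ls_eq X X' -> ls_eq (ls_mul Y X) (ls_mul Y X').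
Proof.
move=> e k; set M := Order.max (lsN X) (lsN X').
have hM : ub X M /\ ub X' M.
  split; [apply: ub_le (@ubN X) _ | apply: ub_le (@ubN X') _]; by rewrite le_max lexx ?orbT.
rewrite (@mulC Y X k (lsN Y) M) //; try apply hM.
rewrite (@mulC Y X' k (lsN Y) M) //; try apply hM.
by apply: eq_bigr => t _; rewrite e.
Qed.

Lemma mul_shiftl (X Y : ls) m k :
  c (ls_mul (ls_shift X m) Y) k = c (ls_mul X Y) (k - m%:Z).
Proof.
rewrite (@mulC _ Y k (lsN X + m%:Z) (lsN Y)) //.
rewrite (@mulC X Y _ (lsN X) (lsN Y)) //.
have -> : lsN X + m%:Z + lsN Y - k = lsN X + lsN Y - (k - m%:Z) by lia.
apply: eq_bigr => t _ /=; congr (c X _ *m c Y _); lia.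
Qed.

Lemma mul_shiftr (X Y : ls) m k :
  c (ls_mul X (ls_shift Y m)) k = c (ls_mul X Y) (k - m%:Z).
Proof.
rewrite (@mulC X _ k (lsN X) (lsN Y + m%:Z)) //.
rewrite (@mulC X Y _ (lsN X) (lsN Y)) //.
have -> : lsN X + (lsN Y + m%:Z) - k = lsN X + lsN Y - (k - m%:Z) by lia.
apply: eq_bigr => t _ /=; congr (c X _ *m c Y _); lia.
Qed.

Lemma mul_cstr (X : ls) M k : c (ls_mul X (ls_cst M)) k = c X k *m M.
Proof.
set B := Order.max (lsN X) k.
have hB : k <= B by rewrite le_max lexx orbT.
have hX : ub X B by apply: ub_le (@ubN X) _; rewrite le_max lexx.
have hc : ub (ls_cst M) 0 by move=> i hi /=; rewrite gt_eqF.
rewrite (@mulE X _ k B 0 B (absz (B - k)).+1) //; last lia.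
rewrite big_ord_recr /= big1 ?add0r.
  have -> : B - (absz (B - k))%:Z = k by lia.
  by have -> : k - B + (absz (B - k))%:Z = 0 by lia.
move=> t _; rewrite ifF ?mulmx0 //; apply/negbTE; have := ltn_ord t; lia.
Qed.

Lemma mul_cstl (Y : ls) M k : c (ls_mul (ls_cst M) Y) k = M *m c Y k.
Proof.
have hc : ub (ls_cst M) 0 by move=> i hi /=; rewrite gt_eqF.
rewrite (@mulC _ Y k 0 (lsN Y)) //.
rewrite /LL big_ord_recl /= subr0 !addr0 big1 ?addr0 // => t _.
by rewrite mul0mx.
Qed.

Lemma mul_assoc (X Y Z : ls) : ls_eq (ls_mul (ls_mul X Y) Z) (ls_mul X (ls_mul Y Z)).
Proof.
move=> k; set L := LL (lsN X + lsN Y + lsN Z - k).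
have hL := LLP (lsN X + lsN Y + lsN Z - k).
rewrite (@mulE _ Z k (lsN X + lsN Y) (lsN Z) (lsN X + lsN Y) L) //; last lia.
rewrite (@mulE X _ k (lsN X) (lsN Y + lsN Z) (lsN X) L) //; last lia.
under eq_bigr => t _.
  rewrite (@mulE X Y _ (lsN X) (lsN Y) (lsN X) L) //; last (by have := ltn_ord t; lia).
  rewrite mulmx_suml.
  over.
rewrite exchange_big; apply: eq_bigr => s _.
rewrite (@mulE Y Z _ (lsN Y) (lsN Z) (lsN Y + s%:Z) L) //; [|lia|lia].
rewrite mulmx_sumr; apply: eq_bigr => t _; rewrite mulmxA.
congr (_ *m c Y _ *m c Z _); lia.
Qed.

Lemma eq_trans (X Y Z : ls) : ls_eq X Y -> ls_eq Y Z -> ls_eq X Z.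
Proof. by move=> h1 h2 k; rewrite h1. Qed.
Lemma eq_sym (X Y : ls) : ls_eq X Y -> ls_eq Y X.
Proof. by move=> h k; rewrite h. Qed.

Lemma mul_cst1 (X : ls) : ls_eq (ls_mul (ls_cst 1%:M) X) X.
Proof. by move=> k; rewrite mul_cstl mul1mx. Qed.

Lemma conj_prod (g gi S1 S2 : ls) : ls_eq (ls_mul gi g) (ls_cst 1%:M) ->
  ls_eq (ls_mul (ls_mul (ls_mul g S1) gi) (ls_mul (ls_mul g S2) gi))
        (ls_mul g (ls_mul (ls_mul S1 S2) gi)).
Proof.
move=> hg.
have i1 : ls_eq (ls_mul gi (ls_mul (ls_mul g S2) gi)) (ls_mul S2 gi).
  apply: eq_trans (eq_sym (mul_assoc _ _ _)) _.
  apply: mul_eql.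
  apply: eq_trans (eq_sym (mul_assoc _ _ _)) _.
  apply: eq_trans (mul_eql _ hg) _.
  exact: mul_cst1.
apply: eq_trans (mul_assoc _ _ _) _.
apply: eq_trans (mul_eqr _ i1) _.
apply: eq_trans (mul_assoc _ _ _) _.
apply: mul_eqr; exact: eq_sym (mul_assoc _ _ _).
Qed.

Lemma conj_comm (g gi S1 S2 U1 U2 : ls) : ls_eq (ls_mul gi g) (ls_cst 1%:M) ->
  ls_eq (ls_mul S1 S2) (ls_mul S2 S1) ->
  ls_eq U1 (ls_mul (ls_mul g S1) gi) -> ls_eq U2 (ls_mul (ls_mul g S2) gi) ->
  ls_eq (ls_mul U1 U2) (ls_mul U2 U1).
Proof.
move=> hg hS h1 h2.
apply: eq_trans (mul_eql _ h1) _; apply: eq_trans (mul_eqr _ h2) _.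
apply: eq_trans (conj_prod _ _ hg) _.
apply: eq_sym.
apply: eq_trans (mul_eql _ h2) _; apply: eq_trans (mul_eqr _ h1) _.
apply: eq_trans (conj_prod _ _ hg) _.
apply: mul_eqr; apply: mul_eql; exact: eq_sym.
Qed.

Lemma zmod_id (V : zmodType) (x y z w q : V) :
  - (x - y) - - (z - w) - (((0 - x) - (w - q)) - ((0 - z) - (y - q))) = 0.
Proof.
rewrite !sub0r !opprB opprD opprK opprB !addrA.
rewrite (addrAC (y - x + z) (-w) (-z)) addrK (addrAC (y - x - w) q (-y)) (addrAC (y - x) (-w) (-y)) (addrAC y (-x) (-y)) subrr add0r.
by rewrite (addrAC (- x - w) q x) (addrAC (- x - w + x) q w) addrK (addrAC (-x) (-w) x) addNr add0r addNr.
Qed.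

Lemma subE (X Y : ls) k : c (ls_sub X Y) k = c X k - c Y k. Proof. by []. Qed.
Lemma brE (X Y : ls) k : c (ls_br X Y) k = c (ls_mul X Y) k - c (ls_mul Y X) k.
Proof. by []. Qed.

Lemma core (p : int -> bool) (s : int) (Q1 Q2 P1 P2 T1 T2 : ls) :
 0 <= s -> s <= 1 -> (forall k, p k = (s <= k)) ->
 (forall k, c P1 k = if p k then c Q1 k else 0) ->
 (forall k, c P2 k = if p k then c Q2 k else 0) ->
 ls_eq (ls_mul Q1 Q2) (ls_mul Q2 Q1) ->
 (forall k, c T1 k = if p k then 0 else - c (ls_br P1 Q2) k) ->
 (forall k, c T2 k = if p k then 0 else - c (ls_br P2 Q1) k) ->
 ls_eq (ls_sub (ls_sub T1 T2) (ls_br (ls_sub P1 Q1) (ls_sub P2 Q2))) (ls0 R n).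
Proof.
move=> s0 s1 hp hP1 hP2 hQ hT1 hT2 k.
rewrite (_ : c (ls0 R n) k = 0) // !subE hT1 hT2.
case hpk: (p k).
  have ubA : forall (P Q : ls), (forall k, c P k = if p k then c Q k else 0) ->
      ub (ls_sub P Q) (s - 1).
    move=> P Q hP i hi; rewrite subE hP.
    have -> : p i by rewrite hp; lia.
    by rewrite subrr.
  have hk : s <= k by rewrite -hp.
  rewrite (@mul_ub0 _ _ k (s - 1) (s - 1) (ubA _ _ hP1) (ubA _ _ hP2)); last lia.
  rewrite (@mul_ub0 _ _ k (s - 1) (s - 1) (ubA _ _ hP2) (ubA _ _ hP1)); last lia.
  by rewrite !subrr.
have hk : k < s by rewrite ltNge -hp hpk.
have lbP : forall (P Q : ls), (forall k, c P k = if p k then c Q k else 0) ->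
    forall i, i < s -> c P i = 0.
  move=> P Q hP i hi; rewrite hP.
  have -> : p i = false by rewrite hp; apply/negbTE; rewrite -ltNge.
  by [].
rewrite !brE !mul_subl !mul_subr.
rewrite (@mul_lb0 P1 P2 k s s (lbP _ _ hP1) (lbP _ _ hP2)); last lia.
rewrite (@mul_lb0 P2 P1 k s s (lbP _ _ hP2) (lbP _ _ hP1)); last lia.
rewrite (hQ k).
exact: zmod_id.
Qed.

Lemma cst_comm (A B : 'M[R]_n) : A *m B = B *m A ->
  ls_eq (ls_mul (ls_cst A) (ls_cst B)) (ls_mul (ls_cst B) (ls_cst A)).
Proof. by move=> h k; rewrite !mul_cstr /=; case: (k == 0) => //; rewrite !mul0mx. Qed.

Lemma scst_comm (A B : 'M[R]_n) : A *m B = B *m A ->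
  ls_eq (ls_mul (ls_shift (ls_cst A) 1) (ls_shift (ls_cst B) 1))
        (ls_mul (ls_shift (ls_cst B) 1) (ls_shift (ls_cst A) 1)).
Proof. by move=> h k; rewrite !mul_shiftl !mul_shiftr (cst_comm h). Qed.

End LS.

Lemma E_comm (C : fieldType) (R : comAlgType C) n r (E : 'I_r -> 'M[C]_n) :
  cartan_basis E -> forall a b, emb R (E a) *m emb R (E b) = emb R (E b) *m emb R (E a).
Proof.
move=> [[_ hc] _] a b; rewrite /emb -!map_mxM; congr map_mx.
by have := hc a b; rewrite !rowK !mxvecK.
Qed.
End SubLib.
Import SubLib.

Theorem corollary2p1
  (C : numClosedFieldType) (n r : nat) (E : 'I_r -> 'M[C]_n)
  (hE : cartan_basis E) (R : comAlgType C) :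
  (* (a) *)
  (forall (d : nat -> 'I_r -> {linear R -> R}),
     (forall m a, is_derivation (d m a)) ->
     (forall m1 a1 m2 a2 x, d m1 a1 (d m2 a2 x) = d m2 a2 (d m1 a1 x)) ->
   forall (U : 'I_r -> lseries R n),
     (exists g ginv : lseries R n, in_Gneg g /\ ls_inverse g ginv /\
        forall a, ls_eq (U a) (ls_mul (ls_mul g (ls_cst (emb R (E a)))) ginv)) ->
     (forall (m : nat) a1 a2,
        ls_eq (ls_map (d m a1) (U a2)) (ls_br (ls_pige (ls_shift (U a1) m)) (U a2))) ->
   forall (m1 m2 : nat) (a1 a2 : 'I_r),
     ls_eq (ls_sub (ls_sub (ls_map (d m1 a1) (A_op (U a2) m2))
                           (ls_map (d m2 a2) (A_op (U a1) m1)))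
                   (ls_br (A_op (U a1) m1) (A_op (U a2) m2)))
           (ls0 R n)) /\
  (* (b) *)
  (forall (d : nat -> 'I_r -> {linear R -> R}),
     (forall (m : nat) b, (1 <= m)%N -> is_derivation (d m b)) ->
     (forall (m1 m2 : nat) b1 b2 x, (1 <= m1)%N -> (1 <= m2)%N ->
        d m1 b1 (d m2 b2 x) = d m2 b2 (d m1 b1 x)) ->
   forall (V : 'I_r -> lseries R n),
     (exists K Kinv : lseries R n, in_Gle0 K /\ ls_inverse K Kinv /\
        forall b, ls_eq (V b)
          (ls_mul (ls_mul K (ls_shift (ls_cst (emb R (E b))) 1)) Kinv)) ->
     (forall (m : nat) b1 b2, (1 <= m)%N ->
        ls_eq (ls_map (d m b1) (V b2))
              (ls_br (ls_pigt (ls_shift (V b1) m.-1)) (V b2))) ->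
   forall (m1 m2 : nat) (b1 b2 : 'I_r), (1 <= m1)%N -> (1 <= m2)%N ->
     ls_eq (ls_sub (ls_sub (ls_map (d m1 b1) (D_op (V b2) m2))
                           (ls_map (d m2 b2) (D_op (V b1) m1)))
                   (ls_br (D_op (V b1) m1) (D_op (V b2) m2)))
           (ls0 R n)).
Proof.
split.
- move=> d _ _ U [g [gi [_ [[_ hgi] hU]]]] hh m1 m2 a1 a2.
  set Q1 := ls_shift (U a1) m1; set Q2 := ls_shift (U a2) m2.
  apply: (@core _ _ (fun k => 0 <= k) 0 Q1 Q2 (ls_pige Q1) (ls_pige Q2)) => //.
  + move=> k; rewrite !mul_shiftl !mul_shiftr.
    have -> : k - m2%:Z - m1%:Z = k - m1%:Z - m2%:Z by lia.
    apply: (conj_comm hgi (cst_comm (E_comm R hE a1 a2)) (hU a1) (hU a2)).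
  + move=> k.
    change (map_mx (d m1 a1) ((if 0 <= k then lsc (U a2) (k - m2%:Z) else 0) - lsc (U a2) (k - m2%:Z))
      = if 0 <= k then 0 else - lsc (ls_br (ls_pige Q1) Q2) k).
    case: ifP => _; first by rewrite subrr map_mx0.
    rewrite sub0r map_mxN.
    rewrite -[map_mx _ _]/(lsc (ls_map (d m1 a1) (U a2)) (k - m2%:Z)) hh.
    by rewrite !brE mul_shiftr mul_shiftl.
  + move=> k.
    change (map_mx (d m2 a2) ((if 0 <= k then lsc (U a1) (k - m1%:Z) else 0) - lsc (U a1) (k - m1%:Z))
      = if 0 <= k then 0 else - lsc (ls_br (ls_pige Q2) Q1) k).
    case: ifP => _; first by rewrite subrr map_mx0.
    rewrite sub0r map_mxN.
    rewrite -[map_mx _ _]/(lsc (ls_map (d m2 a2) (U a1)) (k - m1%:Z)) hh.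
    by rewrite !brE mul_shiftr mul_shiftl.
- move=> d _ _ V [g [gi [_ [[_ hgi] hV]]]] hh m1 m2 b1 b2 hm1 hm2.
  set Q1 := ls_shift (V b1) m1.-1; set Q2 := ls_shift (V b2) m2.-1.
  apply: (@core _ _ (fun k => 0 < k) 1 Q1 Q2 (ls_pigt Q1) (ls_pigt Q2)) => //.
  + move=> k; rewrite !mul_shiftl !mul_shiftr.
    have -> : k - m2.-1%:Z - m1.-1%:Z = k - m1.-1%:Z - m2.-1%:Z by lia.
    apply: (conj_comm hgi (scst_comm (E_comm R hE b1 b2)) (hV b1) (hV b2)).
  + move=> k.
    change (map_mx (d m1 b1) ((if 0 < k then lsc (V b2) (k - m2.-1%:Z) else 0) - lsc (V b2) (k - m2.-1%:Z))
      = if 0 < k then 0 else - lsc (ls_br (ls_pigt Q1) Q2) k).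
    case: ifP => _; first by rewrite subrr map_mx0.
    rewrite sub0r map_mxN.
    rewrite -[map_mx _ _]/(lsc (ls_map (d m1 b1) (V b2)) (k - m2.-1%:Z)) hh //.
    by rewrite !brE mul_shiftr mul_shiftl.
  + move=> k.
    change (map_mx (d m2 b2) ((if 0 < k then lsc (V b1) (k - m1.-1%:Z) else 0) - lsc (V b1) (k - m1.-1%:Z))
      = if 0 < k then 0 else - lsc (ls_br (ls_pigt Q2) Q1) k).
    case: ifP => _; first by rewrite subrr map_mx0.
    rewrite sub0r map_mxN.
    rewrite -[map_mx _ _]/(lsc (ls_map (d m2 b2) (V b1)) (k - m1.-1%:Z)) hh //.
    by rewrite !brE mul_shiftr mul_shiftl.
Qed.
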